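(* Let $G$ be a group and $f:G\to\mathbb{R}$ a nonzero homogeneous quasimorphism. Then there exist a partial order $\preceq$ on $G$ and a bijection $T:G\to G$ such that $(G,\preceq,T)$ is a quasi-total triple, the action of $G$ on itself by left multiplication is an effective, dominating action by automorphisms of $(G,\preceq,T)$ (so the induced order $\leq$ on $G$ is a special quasi-total order), and $f$ is a multiple of a growth function $\gamma_g$ ($g\in G^{++}$) of $\leq$.
   Context: A quasimorphism is $f:G\to\mathbb{R}$ with $\sup_{h,k}|f(hk)-f(h)-f(k)|<\infty$; homogeneous if $f(h^n)=nf(h)$ for $n\in\mathbb{N}$. For a poset $(X,\preceq)$, an order-preserving bijection $T$ is dominant if for all $a,b$ there is $n\in\mathbb{N}$ with $T^na\succ b$. $(X,\preceq,T)$ is a quasi-total triple if $T$ is a dominant order-preserving bijection and there is $N\in\mathbb{N}$ such that for all $a,b$ some $k\in\{0,\dots,N\}$ satisfies $a\preceq T^kb$ or $b\preceq T^ka$. An action of $G$ by automorphisms on $(X,\preceq,T)$ is by order-preserving bijections commuting with $T$; it is dominating if there exist $g\in G,x\in X,n\in\mathbb{N}$ with $g.x\succeq T^n.x$. For an effective action, the induced order on $G$ is $g\leq h\Leftrightarrow\forall k\in G\,\forall x\in X:(kg).x\preceq(kh).x$; an order induced in this way from an effective dominating action on a quasi-total triple is called a special quasi-total order. For a bi-invariant partial order $\leq$ on $G$: $G^+=\{g\geq e\}$, $G^{++}=\{g\in G^+\setminus\{e\}:\forall h\,\exists n\in\mathbb{N}_0,\ g^n\geq h\}$, and for $g\in G^{++}$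 the growth function is $\gamma_g(h)=\lim_{n\to\infty}\frac1n\inf\{p\in\mathbb{Z}: g^p\geq h^n\}$. *)

(* Defs.v *)
From Stdlib Require Import Reals ZArith.
From HB Require Import structures.
From mathcomp Require Import ssreflect ssrfun ssrbool eqtype choice ssrnat seq monoid.

Set Implicit Arguments.
Unset Strict Implicit.
Unset Printing Implicit Defensive.

Local Open Scope group_scope.

Definition quasimorphism (G : groupType) (f : G -> R) : Prop :=
  exists D : R, forall h k : G, (Rabs (f ((h * k)%g) - f h - f k) <= D)%R.

Definition homogeneous (G : groupType) (f : G -> R) : Prop :=
  forall (h : G) (n : nat), (0 < n)%N -> f (h ^+ n) = (INR n * f h)%R.

Section Orders.
Variable X : Type.
Variable le : X -> X -> Prop.

Definition partial_order : Prop :=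
  (forall a, le a a) /\
  (forall a b, le a b -> le b a -> a = b) /\
  (forall a b c, le a b -> le b c -> le a c).

Definition sgt (a b : X) : Prop := le b a /\ a <> b.

Definition order_preserving (T : X -> X) : Prop :=
  forall a b, le a b -> le (T a) (T b).

Definition order_preserving_bijection (T : X -> X) : Prop :=
  bijective T /\ order_preserving T.

Definition dominant (T : X -> X) : Prop :=
  forall a b, exists n : nat, (0 < n)%N /\ sgt (iter n T a) b.

Definition quasi_total_triple (T : X -> X) : Prop :=
  partial_order /\ order_preserving_bijection T /\ dominant T /\
  exists N : nat, (0 < N)%N /\
    forall a b, exists k : nat, (k <= N)%N /\
      (le a (iter k T b) \/ le b (iter k T a)).

End Orders.

Section Actions.
Variables (G : groupType) (X : Type).
Variable act : G -> X -> X.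

Definition is_action : Prop :=
  (forall x, act 1%g x = x) /\ (forall g h x, act ((g * h)%g) x = act g (act h x)).

Definition acts_by_automorphisms (le : X -> X -> Prop) (T : X -> X) : Prop :=
  is_action /\
  forall g : G, order_preserving_bijection le (act g) /\
                (forall x, act g (T x) = T (act g x)).

Definition effective : Prop :=
  forall g : G, (forall x, act g x = x) -> g = 1%g.

Definition dominating (le : X -> X -> Prop) (T : X -> X) : Prop :=
  exists (g : G) (x : X) (n : nat), (0 < n)%N /\ le (iter n T x) (act g x).

Definition induced_order (le : X -> X -> Prop) (g h : G) : Prop :=
  forall (k : G) (x : X), le (act ((k * g)%g) x) (act ((k * h)%g) x).

End Actions.

Definition lmul_act (G : groupType) (g x : G) : G := (g * x)%g.

Definition zexpg (G : groupType) (g : G) (p : Z) : G :=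
  if (0 <=? p)%Z then g ^+ Z.to_nat p else (g ^+ Z.to_nat (- p))^-1.

Section Growth.
Variables (G : groupType) (leG : G -> G -> Prop).

Definition Gpp (g : G) : Prop :=
  leG 1%g g /\ g <> 1%g /\ forall h : G, exists n : nat, leG h (g ^+ n).

(* p = inf { p in Z : g^p >= h^n } (an infimum of integers attained = minimum) *)
Definition is_inf_exponent (g h : G) (n : nat) (p : Z) : Prop :=
  leG (h ^+ n) (zexpg g p) /\
  forall q : Z, leG (h ^+ n) (zexpg g q) -> (p <= q)%Z.

Definition growth_value (g h : G) (l : R) : Prop :=
  exists u : nat -> Z,
    (forall n : nat, is_inf_exponent g h n.+1 (u n)) /\
    Un_cv (fun n => (IZR (u n) / INR n.+1)%R) l.

End Growth.

(* Main.v *)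
Require Import Defs.
From Stdlib Require Import Reals ZArith.
From HB Require Import structures.
From mathcomp Require Import ssreflect ssrfun ssrbool eqtype choice ssrnat seq monoid.
From Stdlib Require Import Lra Lia IndefiniteDescription Classical.

Lemma nat_big (x c : R) : (0 < c)%R -> exists n : nat, (0 < n)%N /\ (x <= INR n * c)%R.
Proof.
move=> hc.
have [h1 h2] := archimed (x / c).
exists (Z.to_nat (up (x / c))).+1; split => //.
rewrite S_INR.
have hx : (x = (x / c) * c)%R by field; lra.
have : (x / c <= INR (Z.to_nat (up (x / c))) + 1)%R.
  case: (Z_lt_le_dec (up (x / c)) 0) => hz.
  - have : (IZR (up (x / c)) < 0)%R by apply: IZR_lt.
    have := pos_INR (Z.to_nat (up (x / c))). lra.
  - rewrite INR_IZR_INZ Z2Nat.id //. lra.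
move=> hle.
rewrite {1}hx.
apply: Rmult_le_compat_r; lra.
Qed.

Lemma arch0 (a C : R) : (forall n : nat, (0 < n)%N -> (Rabs (INR n * a) <= C)%R) -> a = 0%R.
Proof.
move=> H.
apply: NNPP => ha.
have hp : (0 < Rabs a)%R by apply: Rabs_pos_lt.
have [n [hn hle]] := nat_big (C + 1) (Rabs a) hp.
have := H n hn.
rewrite Rabs_mult (Rabs_pos_eq (INR n)); last exact: pos_INR.
lra.
Qed.

Lemma minZ (Q : Z -> Prop) : (exists p, Q p) -> (exists p0, forall p, Q p -> (p0 <= p)%Z) ->
  exists p, Q p /\ forall q, Q q -> (p <= q)%Z.
Proof.
move=> [p Hp] [p0 H0].
pose P k := Q (p0 + Z.of_nat k)%Z.
have Hnat : forall n, (forall k, (k <= n)%coq_nat -> ~ P k) \/ exists k, P k /\ forall j, P j -> (k <= j)%coq_nat.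
  elim=> [|n [IH|IH]]; last by right.
  - case: (classic (P 0)) => h0; last by left => k hk; have -> : k = 0 by lia.
    right; exists 0; split => // j _; lia.
  - case: (classic (P n.+1)) => h1.
      right; exists n.+1; split => // j hj.
      case: (Nat.le_gt_cases n.+1 j) => // hjn.
      exfalso; apply: (IH j) => //; lia.
    left => k hk.
    case: (Nat.eq_dec k n.+1) => [->|hne] //.
    apply: IH; lia.
have hpp : (0 <= p - p0)%Z by have := H0 p Hp; lia.
have Pk : P (Z.to_nat (p - p0)) by rewrite /P Z2Nat.id //; have -> : (p0 + (p - p0) = p)%Z by lia.
case: (Hnat (Z.to_nat (p - p0))) => [Hn|[k [Hk Hmin]]].
  by exfalso; apply: (Hn _ (le_n _)).
exists (p0 + Z.of_nat k)%Z; split => // q Hq.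
have hq0 := H0 q Hq.
have : P (Z.to_nat (q - p0)) by rewrite /P Z2Nat.id; [have -> : (p0 + (q - p0) = q)%Z by lia|lia].
move/Hmin; lia.
Qed.


Set Implicit Arguments.
Unset Strict Implicit.
Section QM.
Local Open Scope group_scope.
Variables (G : groupType) (f : G -> R) (D : R).
Hypothesis hD : forall h k : G, (Rabs (f (h * k) - f h - f k) <= D)%R.
Hypothesis hh : homogeneous f.

Lemma qm_lo h k : (f h + f k - D <= f (h * k))%R.
Proof. have := hD h k; have := Rle_abs (- (f (h * k) - f h - f k)); rewrite Rabs_Ropp; lra. Qed.
Lemma qm_hi h k : (f (h * k) <= f h + f k + D)%R.
Proof. have := hD h k; have := Rle_abs (f (h * k) - f h - f k); lra. Qed.

Lemma D_ge0 : (0 <= D)%R.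
Proof. exact: Rle_trans (Rabs_pos _) (hD 1 1). Qed.

Lemma f1 : f 1 = 0%R.
Proof. have h : f 1 = (INR 2 * f 1)%R by have := @hh 1 2 isT; rewrite expg1n => h; exact: h. simpl in h; lra. Qed.

Lemma fX x n : f (x ^+ n) = (INR n * f x)%R.
Proof. case: n => [|n]; first by rewrite expg0 f1 /=; lra. exact: hh. Qed.

Lemma fV x : f x^-1 = (- f x)%R.
Proof.
suff : (f x + f x^-1 = 0)%R by lra.
apply: (@arch0 _ D) => n hn.
have := hD (x ^+ n) (x^-1 ^+ n).
rewrite expVgn mulgV f1 -expVgn !fX.
have -> : (0 - INR n * f x - INR n * f x^-1 = - (INR n * (f x + f x^-1)))%R by ring.
by rewrite Rabs_Ropp.
Qed.

Lemma fconj y z : f (y^-1 * (z * y)) = f z.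
Proof.
suff : (f (y^-1 * (z * y)) - f z = 0)%R by lra.
apply: (@arch0 _ (2 * D)%R) => n hn.
have e : (y^-1 * (z * y)) ^+ n = y^-1 * (z ^+ n * y).
  by rewrite -!conjgE conjXg.
have h1 := qm_lo y^-1 (z ^+ n * y). have h2 := qm_hi y^-1 (z ^+ n * y).
have h3 := qm_lo (z ^+ n) y. have h4 := qm_hi (z ^+ n) y.
have := fX (y^-1 * (z * y)) n; rewrite e => h5.
rewrite fV fX in h1 h2 h3 h4.
rewrite Rmult_minus_distr_l.
apply: Rabs_le. set a := f (y^-1 * (z ^+ n * y)) in h1 h2 h5 *. set b := f (z ^+ n * y) in h1 h2 h3 h4 *. set c := f (y^-1 * (z * y)) in h5 *. move: h1 h2 h3 h4 h5. generalize (f y) (f z) (INR n) => p q r. lra.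
Qed.

Lemma fZ x p : f (zexpg x p) = (IZR p * f x)%R.
Proof.
rewrite /zexpg; case: (Z.leb_spec 0 p) => hp.
  by rewrite fX INR_IZR_INZ Z2Nat.id.
rewrite fV fX INR_IZR_INZ Z2Nat.id; last lia.
rewrite opp_IZR; lra.
Qed.

End QM.

Set Implicit Arguments.
Unset Strict Implicit.

Definition qle (G : groupType) (f : G -> R) (K : R) (x y : G) : Prop :=
  x = y \/ (K <= f (x^-1 * y)%g)%R.

Lemma invMV (G : groupType) (x y : G) : ((x^-1 * y)^-1 = y^-1 * x)%g.
Proof. by rewrite invgM invgK. Qed.

Ltac flra f :=
  repeat lazymatch goal with
    | H : (_ <= _)%R |- _ => revert H
    | H : (_ < _)%R |- _ => revert H
    | H : @eq R _ _ |- _ => revert H end;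
  repeat match goal with |- context [f ?x] => let y := fresh "y" in set y := f x end;
  repeat match goal with y := f ?a, z := f ?b |- _ =>
     assert_fails constr_eq y z; change z with y in *; clear z end;
  repeat match goal with y := _ : R |- _ => clearbody y end;
  intros; lra.

Section Main.
Local Open Scope group_scope.
Variables (G : groupType) (f : G -> R) (D : R).
Hypothesis hD : forall h k : G, (Rabs (f (h * k) - f h - f k) <= D)%R.
Hypothesis hh : homogeneous f.
Variable t : G.
Hypothesis ht : (D + 1 + D < f t)%R.
Local Notation K := (D + 1)%R.
Local Notation le := (qle f K).
Local Notation T := (fun x : G => x * t).


Lemma L_po : partial_order le.
Proof.
have D0 := D_ge0 hD.
split; [|split].
- by move=> a; left.
- move=> a b [->|h1] // [<-|h2] //.
  exfalso; move: h2; rewrite -invMV (fV hD hh). flra f.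
- move=> a b c [->|h1] // [<-|h2]; [by right|].
  right; have := qm_lo hD (a^-1 * b) (b^-1 * c).
  rewrite -mulgA mulVKg; flra f.
Qed.

Lemma L_T : order_preserving_bijection le T.
Proof.
split.
  exists (fun x => x * t^-1) => x /=; [exact: mulgK|exact: mulgVK].
move=> a b [->|h]; first by left.
right; rewrite invgM -mulgA [a^-1 * (b * t)]mulgA (fconj hD hh) //.
Qed.

Lemma iterT n a : iter n T a = a * t ^+ n.
Proof.
elim: n => [|n IH]; first by rewrite expg0 mulg1.
by rewrite iterS IH expgSr mulgA.
Qed.

Lemma ft_pos : (0 < f t)%R.
Proof. have := D_ge0 hD; flra f. Qed.

Lemma L_dom : dominant le T.
Proof.
move=> a b.
have [n [hn hle]] := nat_big (K + D - f (b^-1 * a)) (f t) ft_pos.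
have hk : (K <= f (b^-1 * iter n T a))%R.
  rewrite iterT mulgA.
  have := qm_lo hD (b^-1 * a) (t ^+ n); rewrite (fX hh); flra f.
exists n; split => //; split; first by right.
move=> e; move: hk; rewrite e mulVg (f1 hh); have := D_ge0 hD; flra f.
Qed.

Lemma L_qt : quasi_total_triple le T.
Proof.
split; first exact: L_po.
split; first exact: L_T.
split; first exact: L_dom.
exists 1%N; split => // a b; exists 1%N; split => //=.
have D0 := D_ge0 hD.
case: (Rle_lt_dec 0 (f (a^-1 * b))) => hz.
  left; right; rewrite mulgA; have := qm_lo hD (a^-1 * b) t; flra f.
right; right; rewrite mulgA; have := qm_lo hD (b^-1 * a) t.
rewrite -invMV (fV hD hh); flra f.
Qed.

Lemma L_act : acts_by_automorphisms (@lmul_act G) le T.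
Proof.
rewrite /lmul_act; split.
  split => [x|g h x]; [exact: mul1g|exact: (esym (mulgA _ _ _))].
move=> g; split; last by move=> x; rewrite mulgA.
split.
  by exists (fun x => g^-1 * x) => x /=; [exact: mulKg|exact: mulVKg].
move=> a b [->|h]; first by left.
by right; rewrite invgM -mulgA mulKg.
Qed.

Lemma L_ind a b : induced_order (@lmul_act G) le a b <-> le a b.
Proof.
rewrite /induced_order /lmul_act; split.
  by move=> /(_ 1 1); rewrite !mul1g !mulg1.
move=> [->|h] k x; first by left.
right; rewrite !invgM -!mulgA mulKg !mulgA -(mulgA _ b) -(mulgA (x^-1)).
by rewrite [a^-1 * (b * x)]mulgA (fconj hD hh).
Qed.

Lemma L_gpp : Gpp (induced_order (@lmul_act G) le) t.
Proof.
have D0 := D_ge0 hD.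
have ftp := ft_pos.
split; [|split].
- apply/L_ind; right; rewrite invg1 mul1g; flra f.
- move=> e; move: ftp; rewrite e (f1 hh); lra.
- move=> h.
  have [n [hn hle]] := nat_big (K + D - f h^-1) (f t) ft_pos.
  exists n; apply/L_ind; right.
  have := qm_lo hD h^-1 (t ^+ n); rewrite (fX hh); flra f.
Qed.

Section Growth.
Variable h : G.

Lemma P_lo m p : le (h ^+ m) (zexpg t p) -> (INR m * f h - D <= IZR p * f t)%R.
Proof.
have D0 := D_ge0 hD.
case=> [e|hk].
- have := fZ hD hh t p; have := fX hh h m; rewrite e; flra f.
- have := qm_hi hD (h ^+ m)^-1 (zexpg t p); rewrite (fV hD hh) (fX hh) (fZ hD hh); flra f.
Qed.

Lemma P_hi m p : (INR m * f h + K + D <= IZR p * f t)%R -> le (h ^+ m) (zexpg t p).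
Proof.
move=> H; right; have := qm_lo hD (h ^+ m)^-1 (zexpg t p).
rewrite (fV hD hh) (fX hh) (fZ hD hh); flra f.
Qed.

Lemma exist_min m : exists p, le (h ^+ m) (zexpg t p) /\
  forall q, le (h ^+ m) (zexpg t q) -> (p <= q)%Z.
Proof.
have ftp := ft_pos.
apply: minZ.
- have [n [_ hn]] := nat_big (INR m * f h + K + D) (f t) ft_pos.
  exists (Z.of_nat n); apply: P_hi; rewrite -INR_IZR_INZ; flra f.
- have [n0 [_ hn0]] := nat_big (D - INR m * f h) (f t) ft_pos.
  exists (- Z.of_nat n0)%Z => p /P_lo hp.
  case: (Z_lt_le_dec p (- Z.of_nat n0)) => // hlt; exfalso.
  have hz : (IZR p <= - INR n0 - 1)%R.
    rewrite INR_IZR_INZ -opp_IZR -minus_IZR; apply: IZR_le; lia.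
  have : (IZR p * f t <= (- INR n0 - 1) * f t)%R by apply: Rmult_le_compat_r; lra.
  flra f.
Qed.

Lemma L_growth : growth_value (induced_order (@lmul_act G) le) t h (f h / f t).
Proof.
have D0 := D_ge0 hD.
have ftp := ft_pos.
have hex : forall n, exists p, is_inf_exponent (induced_order (@lmul_act G) le) t h n.+1 p.
  move=> n; have [p [hp hmin]] := exist_min n.+1; exists p; split; first by apply/L_ind.
  by move=> q /L_ind; apply: hmin.
have [u hu] := functional_choice _ hex.
exists u; split => //.
have hb : forall n, (Rabs (IZR (u n) * f t - INR n.+1 * f h) <= K + D + f t)%R.
  move=> n; have [hp hmin] := hu n.
  have hp' := P_lo (proj1 (L_ind _ _) hp).
  have hn : ~ le (h ^+ n.+1) (zexpg t (u n - 1)).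
    by move=> /(proj2 (L_ind _ _)) /hmin; lia.
  have hn' : (IZR (u n - 1) * f t < INR n.+1 * f h + K + D)%R.
    by apply: Rnot_le_lt => /P_hi.
  rewrite minus_IZR in hn'. apply: Rabs_le. flra f.
move=> eps heps.
have [N [_ hN]] := nat_big (K + D + f t + 1) (eps * f t) (Rmult_lt_0_compat _ _ heps ftp).
exists N => n hn.
rewrite /Rdist.
have hm : (INR N <= INR n.+1)%R by apply: le_INR; lia.
have hm0 : (0 < INR n.+1)%R by apply: lt_0_INR; lia.
have hbn := hb n.
move: hbn hN hm hm0 ftp heps.
generalize (IZR (u n)) (INR n.+1) (INR N) (f h) (f t) => P M NN a b hbn hN hm hm0 hb0 heps.
have e : (P / M - a / b = (P * b - M * a) / (M * b))%R by field; lra.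
rewrite e.
have hX : (0 < M * b)%R by apply: Rmult_lt_0_compat.
have hNM : (NN * (eps * b) <= M * (eps * b))%R by apply: Rmult_le_compat_r; nra.
move: hbn; set E := (P * b - M * a)%R => hbn.
have hE := Rle_abs E. have hE' := Rle_abs (- E). rewrite Rabs_Ropp in hE'.
set q := (E / (M * b))%R.
have hq : (q * (M * b) = E)%R by rewrite /q; field; lra.
apply: Rabs_def1; nra.
Qed.

End Growth.

End Main.


Unset Implicit Arguments.
Set Strict Implicit.

Theorem proposition1p8 (G : groupType) (f : G -> R)
  (hq : quasimorphism f) (hh : homogeneous f) (hnz : exists g : G, f g <> 0%R) :
  exists (le : G -> G -> Prop) (T : G -> G),
    quasi_total_triple le T /\
    acts_by_automorphisms (@lmul_act G) le T /\
    effective (@lmul_act G) /\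
    dominating (@lmul_act G) le T /\
    exists g : G, Gpp (induced_order (@lmul_act G) le) g /\
      exists c : R, forall h : G, exists l : R,
        growth_value (induced_order (@lmul_act G) le) g h l /\ f h = (c * l)%R.
Proof.
move: hq => [D hD].
have D0 := D_ge0 hD.
have [s hs] : exists s : G, (0 < f s)%R.
  move: hnz => [a ha].
  case: (Rlt_le_dec 0 (f a)) => h0; first by exists a.
  exists a^-1%g; rewrite (fV hD hh); lra.
have [m [hm hms]] := nat_big (D + 1 + D + 1) (f s) hs.
pose t := (s ^+ m)%g.
have ht : (D + 1 + D < f t)%R by rewrite /t (fX hh); lra.
exists (qle f (D + 1)), (fun x => (x * t)%g).
split; first exact (L_qt hD hh ht).
split; first exact (L_act f D t).
split; first by move=> g /(_ 1%g); rewrite /lmul_act mulg1.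
split; first by exists t, 1%g, 1%N; split => //=; left; rewrite /lmul_act mul1g mulg1.
exists t; split; first exact (L_gpp hD hh ht).
exists (f t) => h; exists (f h / f t)%R; split; first exact (L_growth hD hh ht h).
field; lra.
Qed.
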